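(* Let $X$ be a Banach space, $(A_m)_{m\in\mathbb{Z}}$ a sequence of invertible bounded linear operators on $X$ with $\sup_m\lVert A_m\rVert<\infty$ admitting an exponential dichotomy, and $c>0$ a constant as described in the context (with $B=l^\infty$). Let $f_n\colon X\to X$, $n\in\mathbb{Z}$, be differentiable maps with $\lVert d_xf_n\rVert\le c$ for all $x,n$, $\sup_n\sup_x\lVert f_n(x)\rVert<\infty$, and $\lVert d_xf_n-d_yf_n\rVert\le D\lVert x-y\rVert^r$ for some $D,r>0$ and all $x,y,n$. Put $F_n=A_n+f_n$ and assume there is $N\in\mathbb N$ with $F_{n+N}=F_n$ for all $n\in\mathbb{Z}$. Then there exists $L>0$ such that for every sufficiently small $\varepsilon>0$ and every sequence $\mathbf y=(y_n)_{n\in\mathbb{Z}}\subset X$ with $\sup_{n\in\mathbb{Z}}\lVert y_{n+1}-F_n(y_n)\rVert\le L\varepsilon$ and $y_{n+N}=y_n$ for all $n\in\mathbb{Z}$, there exists a sequence $\mathbf x=(x_n)_{n\in\mathbb{Z}}$ with $x_{n+1}=F_n(x_n)$ for all $n\in\mathbb{Z}$, $\sup_{n\in\mathbb{Z}}\lVert x_n-y_n\rVert\le\varepsilon$, and $x_{n+N}=x_n$ for all $n\in\mathbb{Z}$.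
   Context: $l^\infty$ denotes the space of bounded real sequences indexed by $\mathbb{Z}$ with the sup norm; $X_{l^\infty}$ is the space of bounded sequences $(x_n)_{n\in\mathbb{Z}}\subset X$ with norm $\sup_n\lVert x_n\rVert$. Exponential dichotomy: with $\mathcal A(m,n)=A_{m-1}\cdots A_n$ ($m>n$), $\mathrm{Id}$ ($m=n$), $A_m^{-1}\cdots A_{n-1}^{-1}$ ($m<n$), there exist projections $P_m$ with $P_{m+1}A_m=A_mP_m$ and $C,\lambda>0$ with $\lVert\mathcal A(m,n)P_n\rVert\le Ce^{-\lambda(m-n)}$ ($m\ge n$) and $\lVert\mathcal A(m,n)(\mathrm{Id}-P_n)\rVert\le Ce^{-\lambda(n-m)}$ ($m\le n$). The constant $c>0$ is such that there is $K>0$ for which every sequence $(B_m)$ of bounded operators with $\sup_m\lVert A_m-B_m\rVert\le c$ admits an exponential dichotomy and the operator $(\mathbb B\mathbf x)_n=B_{n-1}x_{n-1}$ on $X_{l^\infty}$ has $\mathrm{Id}-\mathbb B$ invertible with $\lVert(\mathrm{Id}-\mathbb B)^{-1}\rVert\le K$. *)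

(* Defs.v *)
From HB Require Import structures.
From mathcomp Require Import all_boot all_order all_algebra.
From mathcomp Require Import all_classical all_reals all_analysis.
Set Implicit Arguments. Unset Strict Implicit. Unset Printing Implicit Defensive.
Import Order.TTheory GRing.Theory Num.Theory.
Import numFieldNormedType.Exports.
Local Open Scope ring_scope.

Section Defs.
Variables (R : realType) (V : normedModType R).

(* ||T|| <= M, for a (linear) map T : V -> V, written out via the
   defining property of the operator norm. *)
Definition opnorm_le (T : V -> V) (M : R) : Prop :=
  forall x : V, `|T x| <= M * `|x|.

Definition bounded_op (T : V -> V) : Prop := exists M : R, opnorm_le T M.

Fixpoint prod_fwd (A : int -> V -> V) (n : int) (k : nat) : V -> V :=
  match k with
  | 0%N => id
  | k'.+1 => A (n + k'%:Z) \o prod_fwd A n k'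
  end.

Fixpoint prod_bwd (Ainv : int -> V -> V) (n : int) (k : nat) : V -> V :=
  match k with
  | 0%N => id
  | k'.+1 => Ainv (n - k'.+1%:Z) \o prod_bwd Ainv n k'
  end.

Definition cocycle (A Ainv : int -> V -> V) (m n : int) : V -> V :=
  if n <= m then prod_fwd A n `|m - n|%N else prod_bwd Ainv n `|m - n|%N.

Definition exp_dichotomy_with (A Ainv : int -> V -> V) : Prop :=
  exists (P : int -> {linear V -> V}) (C lam : R),
    0 < C /\ 0 < lam /\
        (forall m, bounded_op (P m)) /\
        (forall m x, P m (P m x) = P m x) /\
        (forall m x, P (m + 1) (A m x) = A m (P m x)) /\
        (forall m n : int, n <= m ->
           opnorm_le (cocycle A Ainv m n \o P n)
                     (C * expR (- lam * (m - n)%:~R))) /\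
        (forall m n : int, m <= n ->
           opnorm_le (cocycle A Ainv m n \o (fun x => x - P n x))
                     (C * expR (- lam * (n - m)%:~R))).

Definition has_exp_dichotomy (B : int -> V -> V) : Prop :=
  exists Binv : int -> V -> V,
    (forall m, cancel (B m) (Binv m) /\ cancel (Binv m) (B m)) /\
    exp_dichotomy_with B Binv.

Definition seq_bounded (x : int -> V) : Prop :=
  exists M : R, forall n, `|x n| <= M.
Definition seq_sup_le (x : int -> V) (M : R) : Prop :=
  forall n, `|x n| <= M.

Definition id_minus_shift (B : int -> V -> V) (x : int -> V) : int -> V :=
  fun n => x n - B (n - 1) (x (n - 1)).

(* Id - BB is invertible on X_{l^infty} with ||(Id - BB)^{-1}|| <= K *)
Definition id_minus_shift_inv_le (B : int -> V -> V) (K : R) : Prop :=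
  (forall x1 x2, seq_bounded x1 -> seq_bounded x2 ->
     id_minus_shift B x1 = id_minus_shift B x2 -> x1 = x2) /\
  (forall z, seq_bounded z ->
     exists x, seq_bounded x /\ id_minus_shift B x = z) /\
  (forall x M, seq_bounded x -> seq_sup_le (id_minus_shift B x) M ->
     seq_sup_le x (K * M)).

(* the constant c of the context *)
Definition admissible_const (A : int -> V -> V) (c : R) : Prop :=
  exists K : R, 0 < K /\
    forall B : int -> {linear V -> V},
      (forall m, bounded_op (B m)) ->
      (forall m, opnorm_le (fun x => A m x - B m x) c) ->
      has_exp_dichotomy (fun m => B m) /\
      id_minus_shift_inv_le (fun m => B m) K.

End Defs.

(* Main.v *)
Require Import Defs.
From HB Require Import structures.
From mathcomp Require Import all_boot all_order all_algebra.
From mathcomp Require Import all_classical all_reals all_analysis.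
From mathcomp Require Import ring lra.
Import Order.TTheory GRing.Theory Num.Theory.
Import numFieldNormedType.Exports.
Local Open Scope ring_scope.


Section Zmod.
Variable V : zmodType.
Implicit Types a b c d e p q X Y P A B : V.
Lemma zid X Y P A B : X - P - A = Y - P - B + (X - Y - (A - B)).
Proof. by rewrite opprB [RHS]addrC addrACA subrKA [B - A]addrC addrK. Qed.
Lemma zsub a p c q : (a - p) - (c - q) = (a - c) - (p - q).
Proof. by rewrite !opprB addrACA [RHS]addrACA [- c + _]addrC. Qed.
Lemma zadd e r1 r2 : (e + r1) - (e + r2) = r1 - r2.
Proof. by rewrite opprD addrACA subrr add0r. Qed.
Lemma zid3 X Y P A B : (X - P - A) - (Y - P - B) = X - Y - (A - B).
Proof. by rewrite (zid X Y P A B) [_ + (X - _ - _)]addrC addrK. Qed.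
Lemma zid2 a b c d e r1 r2 :
  (a - b - (e + r1)) - (c - d - (e + r2)) = (a - c) - (b - d) - (r1 - r2).
Proof. by rewrite (zsub (a - b)) (zadd e) (zsub a b c d). Qed.
Lemma zorb (z' Az dz Ay fy y' F : V) :
  (z' - (Az + dz)) - ((Ay + fy - y') + (F - fy - dz)) = (y' + z') - (Ay + Az + F).
Proof.
rewrite !opprD !opprK !addrA.
rewrite !(addrAC _ (- dz)) addrK !(addrAC _ (- fy)) addrK.
by congr (_ - F); rewrite addrC !addrA addrAC.
Qed.
End Zmod.

Section Half.
Variable R : realType.
Lemma half_ge0 : 0 <= (2^-1 : R). Proof. by rewrite invr_ge0. Qed.
Lemma half_lt1 : `|(2^-1 : R)| < 1.
Proof. by rewrite ger0_norm ?invr_ge0 // invf_lt1 // ltr1n. Qed.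
Lemma geom_le (a b C : R) : (forall k, a <= b + C * (2^-1) ^+ k) -> a <= b.
Proof.
move=> H; apply/ler_addgt0Pr => e e0.
have := cvgr0_norm_lt _ (cvg_geometric C half_lt1) e e0.
move=> [N _ HN].
have := HN N (leqnn N); rewrite /= => HC.
apply: le_trans (H N) _; rewrite lerD2l.
by apply: le_trans (ltW HC); exact: ler_norm.
Qed.
End Half.

Section MVI.
Variables (R : realType) (V : normedModType R).
Lemma diff_est (f : V -> V) x : differentiable f x -> forall e : R, 0 < e ->
  exists2 d : R, 0 < d & forall h, `|h| < d -> `|f (x + h) - f x - 'd f x h| <= e * `|h|.
Proof.
move=> /diff_locally /eqaddoP H e e0.
have := H e e0; move=> /nbhs_norm0P [d d0 Hd]; exists d => // h hd.
suff -> : f (x + h) - f x - 'd f x h = (f \o shift x - (cst (f x) + 'd f x)) h by exact: Hd.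
rewrite /= opprD addrA; congr (_ - _ - _); rewrite addrC //. Qed.

Lemma mvi (f : V -> V) (L : {linear V -> V}) (p h : V) (M : R) :
  (forall t, 0 <= t <= 1 -> differentiable f (p + t *: h)) ->
  (forall t, 0 <= t <= 1 -> forall v, `|'d f (p + t *: h) v - L v| <= M * `|v|) ->
  `|f (p + h) - f p - L h| <= M * `|h|.
Proof.
move=> Hd HM.
apply/ler_addgt0Pr => del del0.
pose K := M * `|h| + del.
pose psi t := `|f (p + t *: h) - f p - t *: L h|.
have psiT : forall a b, psi a <= psi b + `|f (p + a *: h) - f (p + b *: h) - (a - b) *: L h|.
  move=> a b; rewrite /psi scalerBl (zid _ _ (f (p + b *: h)) _ _ (b *: L h)).
  exact: ler_normD.
have step : forall s, 0 <= s <= 1 -> exists2 eta, 0 < eta & forall u,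
    `|u - s| < eta -> `|f (p + u *: h) - f (p + s *: h) - (u - s) *: L h| <= K * `|u - s|.
  move=> s s01.
  have h1 : 0 < `|h| + 1 by rewrite ltr_wpDl.
  have [d d0 Hdd] := diff_est _ _ (Hd s s01) _ (divr_gt0 del0 h1).
  exists (d / (`|h| + 1)); first exact: divr_gt0.
  move=> u us.
  have Eq : p + u *: h = p + s *: h + (u - s) *: h by rewrite -addrA -scalerDl [s + _]addrC subrK.
  have nk : `|(u - s) *: h| < d.
    rewrite normrZ; apply: (@le_lt_trans _ _ (`|u - s| * (`|h| + 1))).
      by rewrite ler_wpM2l // lerDl.
    by rewrite -ltr_pdivlMr.
  have := Hdd _ nk; rewrite -Eq => H1.
  have H2 := HM s s01 ((u - s) *: h).
  rewrite -linearZ /=.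
  set X := f (p + u *: h); set Y := f (p + s *: h).
  set Dk := 'd f (p + s *: h) ((u - s) *: h).
  have -> : X - Y - L ((u - s) *: h) = (X - Y - Dk) + (Dk - L ((u - s) *: h)).
    by rewrite addrA subrK.
  apply: le_trans (ler_normD _ _) _.
  apply: le_trans (lerD H1 H2) _.
  rewrite normrZ /K.
  have : del / (`|h| + 1) * `|h| <= del.
    rewrite mulrAC ler_pdivrMr // ler_wpM2l ?ltW //.
    by rewrite ltrDl.
  move: (normr_ge0 (u - s)) (normr_ge0 h) => a0 b0.
  set e := del / _; set a := `|u - s|; set b := `|h| => hh.
  have -> : e * (a * b) + M * (a * b) = a * (M * b) + a * (e * b) by ring.
  have -> : (M * b + del) * a = a * (M * b) + a * del by ring.
  by rewrite lerD2l ler_wpM2l.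
have sym : forall a b, `|f (p + a *: h) - f (p + b *: h) - (a - b) *: L h| =
    `|f (p + b *: h) - f (p + a *: h) - (b - a) *: L h|.
  by move=> a b; rewrite -normrN opprD opprB -scaleNr opprB.
pose S := [set t : R | 0 <= t <= 1 /\ psi t <= K * t]%classic.
have S0 : S 0.
  split; first by rewrite lexx ler01.
  by rewrite /psi !scale0r addr0 subrr subr0 normr0 mulr0.
have hs : has_sup S.
  split; first by exists 0.
  by exists 1 => t [/andP[_ t1] _].
pose s := sup S.
have ub : forall x, S x -> x <= s.
  by move=> x Sx; have := sup_upper_bound hs; rewrite /ubound /=; apply.
have s0 : 0 <= s by exact: ub _ S0.
have s1 : s <= 1.
  by apply: ge_sup; [exists 0 | move=> t [/andP[_ t1] _]].
have s01 : 0 <= s <= 1 by rewrite s0 s1.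
have [eta eta0 Heta] := step s s01.
have Ss : psi s <= K * s.
  have [t St lt] := sup_adherent eta0 hs.
  have ts : t <= s by exact: ub _ St.
  apply: le_trans (psiT s t) _.
  rewrite sym.
  have lt' : `|t - s| < eta by rewrite distrC ger0_norm ?subr_ge0 // ltrBlDr addrC -ltrBlDr.
  apply: le_trans (lerD St.2 (Heta t lt')) _.
  by rewrite distrC ger0_norm ?subr_ge0 // -mulrDr addrC subrK.
have s_eq1 : s = 1.
  apply/eqP; rewrite eq_le s1 /=; rewrite leNgt; apply/negP => slt1.
  pose u := Num.min (s + eta / 2) 1.
  have su : s < u by rewrite /u lt_min slt1 ltrDl divr_gt0.
  have u1 : u <= 1 by rewrite /u ge_min lexx orbT.
  have ueta : `|u - s| < eta.
    rewrite ger0_norm ?subr_ge0 ?ltW //.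
    have : u <= s + eta / 2 by rewrite /u ge_min lexx.
    move: eta0; lra.
  have Su : S u.
    split; first by rewrite u1 andbT (le_trans s0) ?ltW.
    apply: le_trans (psiT u s) _.
    apply: le_trans (lerD Ss (Heta u ueta)) _.
    rewrite (@ger0_norm _ (u - s)); last by rewrite subr_ge0 ltW.
    by rewrite -mulrDr addrC subrK.
  have us := ub _ Su.
  by move: (lt_le_trans su us); rewrite ltxx.
have := Ss; rewrite s_eq1 mulr1 /psi !scale1r //.
Qed.
End MVI.

Section Geom.
Variables (R : realType) (V : completeNormedModType R).
Lemma geom_lim (u : nat -> V) (C : R) :
  (forall k, `|u k.+1 - u k| <= C * (2^-1) ^+ k) ->
  exists l, forall k, `|u k - l| <= 2 * C * (2^-1) ^+ k.
Proof.
move=> Hu.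
have C0 : 0 <= C.
  have := Hu 0%N; rewrite expr0 mulr1 => H; exact: le_trans (normr_ge0 _) H.
set q : R := 2^-1.
have tail : forall k m, `|u k - u (k + m)%N| <= 2 * C * q ^+ k - 2 * C * q ^+ (k + m).
  move=> k; elim=> [|m IH]; first by rewrite addn0 !subrr normr0.
  rewrite addnS; apply: le_trans (ler_distD (u (k + m)%N) _ _) _.
  rewrite [X in _ + X <= _]distrC.
  apply: le_trans (lerD IH (Hu (k + m)%N)) _.
  rewrite exprS /q le_eqVlt; apply/predU1P; left; by field.
have cs : cvgn (series (telescope u)).
  apply: normed_cvg.
  apply: (@series_le_cvg _ _ (geometric C q)).
  - by move=> n /=; exact: normr_ge0.
  - by move=> n; rewrite /= mulr_ge0 // exprn_ge0 // (half_ge0 R).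
  - by move=> n; rewrite /= /telescope; exact: Hu.
  - exact: is_cvg_geometric_series (half_lt1 R).
have cu : cvgn u.
  have -> : u = (fun n => u 0%N) + series (telescope u).
    by apply/funext => n; rewrite /= telescopeK /= addrC subrK.
  by apply: is_cvgD => //; exact: is_cvg_cst.
pose l := lim (u @ \oo)%classic. exists l => k.
have cn : ((fun m => `|u k - u m|) @ \oo --> `|u k - l|)%classic.
  apply: cvg_norm; apply: cvgB => //; exact: cvg_cst.
have ev : (\forall m \near \oo, `|u k - u m| <= 2 * C * q ^+ k)%classic.
  near=> m.
  have km : (k <= m)%N by near: m; exact: nbhs_infty_ge.
  rewrite -(subnKC km); apply: le_trans (tail _ _) _.
  by rewrite lerBlDr lerDl mulr_ge0 ?exprn_ge0 ?mulr_ge0 ?(half_ge0 R).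
have := limr_le (cvgP _ cn) ev.
rewrite (cvg_lim _ cn); [by apply; exact: _ | exact: norm_hausdorff].
Unshelve. all: by end_near.
Qed.
End Geom.

Theorem corollary3p6 (R : realType) (V : completeNormedModType R)
  (A : int -> {linear V -> V}) (Ainv : int -> V -> V) (c : R)
  (f : int -> V -> V) (D r : R) (N : nat) :
  (forall m, bounded_op (A m)) ->
  (forall m, cancel (A m) (Ainv m) /\ cancel (Ainv m) (A m)) ->
  (exists M : R, forall m, opnorm_le (A m) M) ->
  exp_dichotomy_with (fun m => A m) Ainv ->
  0 < c -> admissible_const (fun m => A m) c ->
  (forall n x, differentiable (f n) x) ->
  (forall n x, opnorm_le ('d (f n) x) c) ->
  (exists M : R, forall n x, `|f n x| <= M) ->
  0 < D -> 0 < r ->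
  (forall n x y, opnorm_le (fun v => 'd (f n) x v - 'd (f n) y v)
                           (D * `|x - y| `^ r)) ->
  (0 < N)%N ->
  (forall n x, A (n + N%:Z) x + f (n + N%:Z) x = A n x + f n x) ->
  exists L : R, 0 < L /\
    exists eps0 : R, 0 < eps0 /\
      forall eps : R, 0 < eps -> eps <= eps0 ->
        forall y : int -> V,
          (forall n, `|y (n + 1) - (A n (y n) + f n (y n))| <= L * eps) ->
          (forall n, y (n + N%:Z) = y n) ->
          exists x : int -> V,
            [/\ (forall n, x (n + 1) = A n (x n) + f n (x n)),
                (forall n, `|x n - y n| <= eps) &
                (forall n, x (n + N%:Z) = x n)].
Proof.
move=> HAb Hinv [MA HMA] Hdich c0 [K [K0 HK]] Hdiff Hdc [Mf HMf] D0 r0 Hhol N0 Hper.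
set q : R := 2^-1.
have q0 : 0 <= q by exact: half_ge0.
have q1 : q <= 1 by rewrite /q invf_le1 // ler1n.
pose L := (2 * K)^-1.
have L0 : 0 < L by rewrite invr_gt0 mulr_gt0.
exists L; split => //.
pose eps0 := ((2 * K * D)^-1) `^ (r^-1).
have eps00 : 0 < eps0 by apply: powR_gt0; rewrite invr_gt0 !mulr_gt0.
exists eps0; split => //.
move=> eps e0 ee0 y Hy Hyper.
pose Lip := D * eps `^ r.
have Lip0 : 0 <= Lip by rewrite mulr_ge0 ?powR_ge0 // ltW.
have KLip : K * Lip <= q.
  have : eps `^ r <= (2 * K * D)^-1.
    have -> : (2 * K * D)^-1 = eps0 `^ r.
      rewrite /eps0 -powRrM mulVf ?gt_eqF // powRr1 // invr_ge0 !mulr_ge0 // ltW //.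
    by apply: ge0_ler_powR => //; rewrite ?nnegrE ltW.
  move=> H; rewrite /Lip mulrA.
  apply: le_trans (ler_wpM2l _ H) _; first by rewrite mulr_ge0 ?ltW.
  rewrite le_eqVlt; apply/predU1P; left; rewrite /q; field.
  by rewrite ?gt_eqF.
pose B : int -> {linear V -> V} := fun m => A m \+ 'd (f m) (y m).
have BE : forall m v, B m v = A m v + 'd (f m) (y m) v by [].
have HBM : forall m, exists2 M, 0 <= M & opnorm_le (B m) M.
  move=> m; have [M HM] := HAb m; exists (`|M| + c); first by rewrite addr_ge0 // ltW.
  move=> v; rewrite BE mulrDl; apply: le_trans (ler_normD _ _) _; apply: lerD.
    by apply: le_trans (HM v) _; rewrite ler_wpM2r // ler_norm.
  exact: Hdc.
have HBb : forall m, bounded_op (B m).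
  by move=> m; have [M _ HM] := HBM m; exists M.
have HBc : forall m, opnorm_le (fun x => A m x - B m x) c.
  by move=> m v; rewrite BE opprD addrA subrr add0r normrN; exact: Hdc.
have [_ [Hinj [Hsurj Hnorm]]] := HK B HBb HBc.
pose Rm m w := f m (y m + w) - f m (y m) - 'd (f m) (y m) w.
have Hlip : forall m a b, `|a| <= eps -> `|b| <= eps -> `|Rm m a - Rm m b| <= Lip * `|a - b|.
  move=> m a b ha hb.
  rewrite /Rm zid3 -linearB /=.
  have -> : y m + a = (y m + b) + (a - b) by rewrite -addrA [b + _]addrC subrK.
  apply: mvi => t /andP[t0 t1]; first exact: Hdiff.
  move=> v; apply: le_trans (Hhol m _ _ v) _.
  apply: ler_wpM2r => //; rewrite /Lip; apply: ler_wpM2l; first exact: ltW.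
  apply: ge0_ler_powR => //; [exact: ltW | by rewrite nnegrE | by rewrite nnegrE ltW |].
  have -> : y m + b + t *: (a - b) - y m = (1 - t) *: b + t *: a.
    by rewrite addrAC [y m + b]addrC addrK scalerBr scalerBl scale1r addrA addrAC.
  apply: le_trans (ler_normD _ _) _.
  rewrite !normrZ !ger0_norm ?subr_ge0 //.
  have -> : eps = (1 - t) * eps + t * eps by ring.
  by apply: lerD; rewrite ler_wpM2l ?subr_ge0.
have HR0 : forall m, Rm m 0 = 0 by move=> m; rewrite /Rm addr0 subrr linear0 subr0.
have HRb : forall m a, `|a| <= eps -> `|Rm m a| <= Lip * `|a|.
  move=> m a ha; have := Hlip m a 0 ha; rewrite normr0 HR0 !subr0; apply; exact: ltW.
pose e m := A m (y m) + f m (y m) - y (m + 1).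
have He : forall m, `|e m| <= L * eps by move=> m; rewrite /e distrC; exact: Hy.
pose G (z : int -> V) n := e (n - 1) + Rm (n - 1) (z (n - 1)).
pose ims := id_minus_shift (fun m => B m).
have imsE : forall z n, ims z n = z n - B (n - 1) (z (n - 1)) by [].
pose dif (z w : int -> V) := fun n => z n - w n.
have imsB : forall z1 z2 n, ims (dif z1 z2) n = ims z1 n - ims z2 n.
  by move=> z1 z2 n; rewrite !imsE /dif linearB zsub.
have bnd : forall (z : int -> V) (M : R), seq_sup_le z M -> seq_bounded z by move=> z M H; exists M.
have Gb : forall z, seq_sup_le z eps -> seq_sup_le (G z) (L * eps + Lip * eps).
  move=> z hz n; rewrite /G; apply: le_trans (ler_normD _ _) _; apply: lerD => //.
  apply: le_trans (HRb _ _ (hz _)) _; apply: ler_wpM2l => //; exact: hz.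
have contr : forall u1 u2 v1 v2 del, seq_bounded u1 -> seq_bounded u2 ->
   seq_sup_le v1 eps -> seq_sup_le v2 eps -> seq_sup_le (dif v1 v2) del ->
   ims u1 = G v1 -> ims u2 = G v2 -> seq_sup_le (dif u1 u2) (q * del).
  move=> u1 u2 v1 v2 del [M1 h1] [M2 h2] hv1 hv2 hd e1 e2.
  have del0 : 0 <= del by apply: le_trans (hd 0); exact: normr_ge0.
  have bd : seq_bounded (dif u1 u2).
    exists (M1 + M2) => n; rewrite /dif; apply: le_trans (ler_normB _ _) _.
    exact: lerD.
  have sd : seq_sup_le (ims (dif u1 u2)) (Lip * del).
    move=> n; rewrite imsB e1 e2 /G zadd.
    apply: le_trans (Hlip _ _ _ (hv1 _) (hv2 _)) _; apply: ler_wpM2l => //; exact: hd.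
  move=> n; apply: le_trans (Hnorm _ _ bd sd n) _.
  rewrite mulrA; apply: ler_wpM2r => //.
have Tex : forall z : int -> V, exists x : int -> V,
    seq_sup_le z eps -> seq_bounded x /\ ims x = G z.
  move=> z; case: (pselect (seq_sup_le z eps)) => hz; last by exists z.
  have [x [xb xe]] := Hsurj (G z) (bnd _ _ (Gb z hz)).
  by exists x.
case: (choice Tex) => T HT.
have Tball : forall z, seq_sup_le z eps -> seq_sup_le (T z) eps.
  move=> z hz; have [tb te] := HT z hz.
  have sd : seq_sup_le (ims (T z)) (L * eps + Lip * eps) by rewrite te; exact: Gb.
  move=> n; apply: le_trans (Hnorm _ _ tb sd n) _.
  rewrite mulrDr mulrA mulrA.
  have -> : K * L = q by rewrite /L /q; field; rewrite gt_eqF.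
  have : K * Lip * eps <= q * eps by apply: ler_wpM2r => //; exact: ltW.
  move=> h; apply: le_trans (lerD (lexx _) h) _.
  rewrite /q; lra.
pose zs k := iter k T (fun _ => 0).
have zsb : forall k, seq_sup_le (zs k) eps.
  elim=> [|k IH] n /=; first by rewrite normr0 ltW.
  exact: Tball.
have zsd : forall k, seq_sup_le (dif (zs k.+1) (zs k)) (eps * q ^+ k).
  elim=> [|k IH].
    move=> n; rewrite /dif /= subr0 expr0 mulr1; exact: (Tball _ (zsb 0%N)).
  have [b1 e1] := HT (zs k.+1) (zsb _).
  have [b0 e0'] := HT (zs k) (zsb _).
  have := contr (zs k.+2) (zs k.+1) (zs k.+1) (zs k) _ b1 b0 (zsb _) (zsb _) IH e1 e0'.
  by rewrite exprS mulrCA.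
have Hl : forall n, exists l, forall k, `|zs k n - l| <= 2 * eps * q ^+ k.
  move=> n; apply: geom_lim => k; exact: zsd k n.
case: (choice Hl) => z Hz.
have Hz' : forall k n, `|zs k.+1 n - z n| <= 2 * eps * q ^+ k.
  move=> k n; apply: le_trans (Hz n k.+1) _; rewrite exprS mulrA.
  apply: ler_wpM2r; first exact: exprn_ge0.
  rewrite -[leRHS]mulr1; apply: ler_wpM2l => //; by rewrite mulr_ge0 // ltW.
have zball : forall n, `|z n| <= eps.
  move=> n; apply: (@geom_le _ _ _ (2 * eps)) => k.
  have -> : z n = zs k n - (zs k n - z n) by rewrite opprB addrC subrK.
  apply: le_trans (ler_normB _ _) _; apply: lerD; [exact: zsb | exact: Hz].
have zeq : forall n, ims z n = G z n.
  move=> n; apply/eqP; rewrite -subr_eq0 -normr_le0.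
  have [MB MB0 HMB] := HBM (n - 1).
  apply: (@geom_le _ _ _ (2 * eps * (1 + MB + Lip))) => k; rewrite add0r.
  have [_ ek] := HT (zs k) (zsb k).
  have ekn : ims (zs k.+1) n = G (zs k) n by rewrite /= ek.
  have -> : ims z n - G z n = (ims z n - G z n) - (ims (zs k.+1) n - G (zs k) n).
    by rewrite ekn subrr subr0.
  rewrite !imsE /G zid2 -linearB.
  apply: le_trans (ler_normB _ _) _.
  have t1 : `|z n - zs k.+1 n| <= 2 * eps * q ^+ k by rewrite distrC; exact: Hz'.
  have t2 : `|B (n - 1) (z (n - 1) - zs k.+1 (n - 1))| <= MB * (2 * eps * q ^+ k).
    apply: le_trans (HMB _) _; apply: ler_wpM2l => //.
    by rewrite distrC; exact: Hz'.
  have t3 : `|Rm (n - 1) (z (n - 1)) - Rm (n - 1) (zs k (n - 1))| <= Lip * (2 * eps * q ^+ k).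
    apply: le_trans (Hlip _ _ _ (zball _) (zsb _ _)) _; apply: ler_wpM2l => //.
    by rewrite distrC; exact: Hz.
  apply: le_trans (lerD (ler_normB _ _) t3) _.
  apply: le_trans (lerD (lerD t1 t2) (lexx _)) _.
  by rewrite le_eqVlt; apply/predU1P; left; ring.
have e1 : forall m : int, m + 1 - 1 = m by move=> m; rewrite addrK.
have e2 : forall n : int, n - 1 + 1 = n by move=> n; rewrite subrK.
have orb : forall (w : int -> V) m, ims w (m + 1) = G w (m + 1) <->
    y (m + 1) + w (m + 1) = A m (y m + w m) + f m (y m + w m).
  move=> w m; rewrite imsE /G e1 BE /e /Rm.
  have AD : A m (y m + w m) = A m (y m) + A m (w m) by exact: linearD.
  have key := zorb _ (w (m + 1)) (A m (w m)) ('d (f m) (y m) (w m)) (A m (y m))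
    (f m (y m)) (y (m + 1)) (f m (y m + w m)).
  split => H.
    by apply/eqP; rewrite -subr_eq0 (linearD (A m)) -key H subrr.
  by apply/eqP; rewrite -subr_eq0 key H (linearD (A m)) subrr.
pose x n := y n + z n.
have xorb : forall n, x (n + 1) = A n (x n) + f n (x n).
  by move=> n; apply/orb; exact: zeq.
pose w' n := z (n + N%:Z).
have w'b : seq_sup_le w' eps by move=> n; exact: zball.
have w'eq : forall n, ims w' n = G w' n.
  move=> n; rewrite -(e2 n); apply/orb.
  have := xorb (n - 1 + N%:Z); rewrite /x /w' Hper Hyper (addrAC (n - 1) N%:Z 1) Hyper.
  done.
have zw : z = w'.
  have zsb' : seq_sup_le z eps by exact: zball.
  have fz : ims z = G z by apply/funext => n; exact: zeq.
  have fw : ims w' = G w' by apply/funext => n; exact: w'eq.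
  have dk : forall k, seq_sup_le (dif z w') (2 * eps * q ^+ k).
    elim=> [|k IH].
      move=> n; rewrite /dif expr0 mulr1; apply: le_trans (ler_normB _ _) _.
      by apply: le_trans (lerD (zball n) (w'b n)) _; lra.
    have := contr z w' z w' _ (bnd _ _ zsb') (bnd _ _ w'b) zsb' w'b IH fz fw.
    by rewrite exprS mulrCA.
  apply/funext => n; apply/eqP; rewrite -subr_eq0 -normr_le0.
  apply: (@geom_le _ _ _ (2 * eps)) => k; rewrite add0r; exact: dk k n.
exists x; split => //.
- by move=> n; rewrite /x addrC addKr; exact: zball.
- by move=> n; rewrite /x Hyper -/(w' n) -zw.
Qed.
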